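(* Fix a positive integer $l$ and $\rho\in\mathcal C$. For every $n\ge1$ let $\pi_n$ be a random permutation in $S_n$ with law $\mathbb P_n$, such that \[ \lim_{n\to\infty}\sup_{\mathbf p,\mathbf q\in\mathcal S(n,l)}\left|\frac{n^l\,\mathbb P_n(\pi_n(\mathbf p)=\mathbf q)}{\prod_{a=1}^l\rho\left(\frac{p_a}{n},\frac{q_a}{n}\right)}-1\right|=0. \] Suppose $\mathbf p_n\in\mathcal S(n,l)$ satisfies $\frac1n\mathbf p_n\to\mathbf x=(x_1,\dots,x_l)\in[0,1]^l$. Then $\frac1n\pi_n(\mathbf p_n)$ converges in distribution to $(Y(x_1),\dots,Y(x_l))$, where $Y(x_1),\dots,Y(x_l)$ are mutually independent and $Y(x_a)$ has density $\rho(x_a,\cdot)$ on $[0,1]$.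
   Context: $[n]=\{1,\dots,n\}$. $\mathcal S(n,l)=\{\mathbf p=(p_1,\dots,p_l)\in[n]^l: p_a\ne p_b \text{ for } a\ne b\}$; for a permutation $\pi_n$, $\pi_n(\mathbf p)=(\pi_n(p_1),\dots,\pi_n(p_l))$. $\mathcal C$ is the set of strictly positive continuous functions $\rho$ on $[0,1]^2$ with $\int_0^1\rho(x,y)\,dx=\int_0^1\rho(x,y)\,dy=1$ for all $x,y$. *)

(* Defs.v *)
From HB Require Import structures.
From mathcomp Require Import all_boot all_order all_algebra all_fingroup.
From mathcomp Require Import all_classical all_reals all_analysis.
Set Implicit Arguments. Unset Strict Implicit. Unset Printing Implicit Defensive.
Import Order.TTheory GRing.Theory Num.Theory.
Import numFieldNormedType.Exports.
Local Open Scope classical_set_scope.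
Local Open Scope ring_scope.

Section Defs.
Variable R : realType.

Definition in_class_C (rho : R -> R -> R) : Prop :=
  [/\ forall x y, x \in `[0%R, 1%R] -> y \in `[0%R, 1%R] -> 0 < rho x y,
      {within `[0%R, 1%R] `*` `[0%R, 1%R], continuous (fun z : R * R => rho z.1 z.2)},
      (forall x, x \in `[0%R, 1%R] ->
         (\int[@lebesgue_measure R]_(y in `[0%R, 1%R]) (rho x y)%:E = 1%E)%E) &
      (forall y, y \in `[0%R, 1%R] ->
         (\int[@lebesgue_measure R]_(x in `[0%R, 1%R]) (rho x y)%:E = 1%E)%E)].

(* A law of a random permutation of [n] (permutations of 'I_n, i.e. of
   {0,..,n-1}; element k of [n] corresponds to the ordinal k-1). *)
Definition is_perm_law n (P : {ffun {perm 'I_n} -> R}) : Prop :=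
  (forall s, 0 <= P s) /\ \sum_s P s = 1.

(* S(n,l), encoded 0-based: injective maps 'I_l -> 'I_n
   (p_a in [n] corresponds to the ordinal p_a - 1). *)
Definition Sinj n l : {set {ffun 'I_l -> 'I_n}} :=
  [set f : {ffun 'I_l -> 'I_n} | injectiveb f].

Definition prob_map n l (P : {ffun {perm 'I_n} -> R})
  (p q : {ffun 'I_l -> 'I_n}) : R :=
  \sum_(s : {perm 'I_n} | [forall a, s (p a) == q a]) P s.

Definition deviation (rho : R -> R -> R) n l (P : {ffun {perm 'I_n} -> R})
  (p q : {ffun 'I_l -> 'I_n}) : R :=
  `| (n%:R ^+ l * prob_map P p q) /
       (\prod_(a < l) rho ((p a).+1%:R / n%:R) ((q a).+1%:R / n%:R)) - 1 |.

(* sup over p, q in S(n,l) (a finite maximum of nonnegative reals) *)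
Definition sup_deviation (rho : R -> R -> R) n l (P : {ffun {perm 'I_n} -> R}) : R :=
  \big[Num.max/0]_(p in Sinj n l) \big[Num.max/0]_(q in Sinj n l)
     deviation rho P p q.

(* pi applied to an element k of [n] = {1,..,n} *)
Definition perm_app n (s : {perm 'I_n}) (k : nat) : nat :=
  match @insub nat (fun i => i < n)%N _ k.-1 with
  | Some i => (s i).+1
  | None => k
  end.

Definition cdf_scaled_image n l (P : {ffun {perm 'I_n} -> R}) (p : 'I_l -> nat)
  (t : 'rV[R]_l) : R :=
  \sum_(s : {perm 'I_n} | [forall a, (perm_app s (p a))%:R / n%:R <= t ord0 a]) P s.

Definition cdf_Y (rho : R -> R -> R) (x s : R) : R :=
  fine (\int[@lebesgue_measure R]_(y in `[0%R, 1%R] `&` `]-oo, s%R]) (rho x y)%:E).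

Definition cdf_indep_Y (rho : R -> R -> R) l (x : 'I_l -> R) (t : 'rV[R]_l) : R :=
  \prod_(a < l) cdf_Y rho (x a) (t ord0 a).

Definition cvg_in_distribution l (F : nat -> 'rV[R]_l -> R) (G : 'rV[R]_l -> R) : Prop :=
  forall t : 'rV[R]_l, {for t, continuous G} -> F n t @[n --> \oo] --> G t.

End Defs.

(* Main.v *)
Require Import Defs.
From HB Require Import structures.
From mathcomp Require Import all_boot all_order all_algebra all_fingroup.
From mathcomp Require Import all_classical all_reals all_analysis.
From mathcomp Require Import ring lra measurable_realfun measurable_fun_approximation.
Import Order.TTheory GRing.Theory Num.Theory.
Import numFieldNormedType.Exports.
Local Open Scope classical_set_scope.
Local Open Scope ring_scope.
Section S. Variable R : realType.
Definition cell (n k : nat) : set R := `](k%:R / n%:R), (k.+1%:R / n%:R)].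

Lemma cell_uniq n k k' y : (0 < n)%N -> cell n k y -> cell n k' y -> k = k'.
Proof.
move=> n0; rewrite /cell /= !in_itv /= => /andP[a b] /andP[c d].
have n0' : (0:R) < n%:R by rewrite ltr0n.
rewrite ltr_pdivrMr // in a; rewrite ler_pdivlMr // in b.
rewrite ltr_pdivrMr // in c; rewrite ler_pdivlMr // in d.
have h1 : (k%:R < k'.+1%:R :> R) by apply: (lt_le_trans a).
have h2 : (k'%:R < k.+1%:R :> R) by apply: (lt_le_trans c).
rewrite ltr_nat in h1; rewrite ltr_nat in h2; apply/eqP; rewrite eqn_leq; apply/andP; split; by rewrite -ltnS.
Qed.

Lemma sum_cell n (F : nat -> R) y :
  (\sum_(k < n) F k * \1_(cell n k) y = 0) \/
  exists k : 'I_n, cell n k y /\ \sum_(k < n) F k * \1_(cell n k) y = F k.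
Proof.
case: (pselect (exists k : 'I_n, cell n k y)) => [[k hk]|hn]; [right|left].
  exists k; split => //; rewrite (bigD1 k) //= indicE mem_set // mulr1 big1 ?addr0 //.
  move=> j /eqP jk; rewrite indicE memNset ?mulr0 //.
  move=> hj; apply: jk; apply: val_inj => /=; apply: (@cell_uniq n j k y _ hj hk).
  exact: (leq_ltn_trans (leq0n _) (ltn_ord k)).
apply: big1 => j _; rewrite indicE memNset ?mulr0 // => hj; apply: hn; by exists j.
Qed.

Lemma exists_cell n y : (0 < n)%N -> 0 < y -> exists k : nat, cell n k y.
Proof.
move=> n0 y0.
have ny0 : 0 < y * n%:R by rewrite mulr_gt0 // ltr0n.
set m := Num.ceil (y * n%:R).
have m0 : (0 < m)%R.
  have : (0:R) < m%:~R by apply: (lt_le_trans ny0); exact: ceil_ge.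
  by rewrite ltr0z.
have [k mk] : exists k : nat, m = k.+1%:Z.
  by case: m m0 => [[|k]|] //; exists k.
exists k; rewrite /cell /= in_itv /=; apply/andP; split.
  rewrite ltr_pdivrMr ?ltr0n //.
  have := ceilB1_lt (y * n%:R); rewrite -/m mk (_ : k.+1%:Z - 1 = k%:Z) //.
  by rewrite -addn1 PoszD addrK.
rewrite ler_pdivlMr ?ltr0n //. have := ceil_ge (y * n%:R); by rewrite -/m mk.
Qed.
Lemma cell_measure n k : (0 < n)%N -> lebesgue_measure (cell n k) = (n%:R^-1 : R)%:E.
Proof.
move=> n0; rewrite /cell lebesgue_measure_itv /= lte_fin ltr_pM2r ?invr_gt0 ?ltr0n // ltr_nat ltnSn.
by rewrite -EFinD -mulrBl -natrB // subSnn mul1r.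
Qed.

Lemma integral_cells n (F : nat -> R) (D : set R) : measurable D -> (0 < n)%N ->
  (forall k : 'I_n, 0 <= F k) -> (forall k : 'I_n, F k != 0 -> cell n k `<=` D) ->
  (\int[@lebesgue_measure R]_(y in D) (\sum_(k < n) F k * \1_(cell n k) y)%:E =
   (\sum_(k < n) F k * n%:R^-1)%:E)%E.
Proof.
move=> mD n0 F0 FD.
under eq_integral do rewrite -sumEFin.
rewrite ge0_integral_sum //; last first.
- by move=> k y _; rewrite lee_fin mulr_ge0.
- move=> k; apply/measurable_EFinP; apply: measurable_funM; first exact: measurable_cst.
  by apply: measurable_indic; rewrite /cell; exact: measurable_itv.
rewrite -sumEFin; apply: eq_bigr => k _.
under eq_integral do rewrite EFinM.
have h1 : forall x, D x -> (0 <= (\1_(cell n k) x : R)%:E)%E by move=> y _; rewrite lee_fin.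
have h2 : measurable_fun D (fun x => (\1_(cell n k) x : R)%:E).
  by apply/measurable_EFinP; apply: measurable_indic; exact: measurable_itv.
rewrite (ge0_integralZl_EFin (@lebesgue_measure R) mD h1 h2 (F0 k)).
rewrite integral_indic //; last exact: measurable_itv.
have [->|Fk] := eqVneq (F k) 0; first by rewrite mul0r mul0e.
rewrite setIidl; last exact: FD.
by rewrite EFinM; congr (_ * _)%E; exact: cell_measure.
Qed.

Lemma sum_cell1 n (F : nat -> R) y k : (k < n)%N -> cell n k y ->
  \sum_(j < n) F j * \1_(cell n j) y = F k.
Proof.
move=> kn hk; rewrite (bigD1 (Ordinal kn)) //= indicE mem_set // mulr1 big1 ?addr0 //.
move=> j /eqP jk; rewrite indicE memNset ?mulr0 //.
move=> hj; apply: jk; apply: val_inj => /=; apply: (@cell_uniq n j k y _ hj hk).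
exact: (leq_ltn_trans (leq0n _) kn).
Qed.

Lemma L1 (f : R -> R -> R) (A : set (R*R)) :
  {within A, continuous (fun z : R * R => f z.1 z.2)} ->
  forall z, A z -> forall e : R, 0 < e -> exists2 d : R, 0 < d &
   forall w, A w -> `|w.1 - z.1| < d -> `|w.2 - z.2| < d -> `|f z.1 z.2 - f w.1 w.2| < e.
Proof.
move=> /subspace_continuousP cf z Az e e0.
have := cf z Az; move/cvgrPdist_lt => /(_ e e0).
rewrite /within /= => /nbhs_ballP [d d0 H]; exists d => // w Aw h1 h2.
apply: (H w) => //.
by split => /=; rewrite /ball /= distrC.
Qed.

Arguments L1 {f A}.

Lemma L2 (f : R -> R -> R) :
  {within `[0%R, 1%R] `*` `[0%R, 1%R], continuous (fun z : R * R => f z.1 z.2)} ->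
  exists2 M : R, 0 < M & forall a b, a \in `[0%R,1%R] -> b \in `[0%R,1%R] -> `|f a b| <= M.
Proof.
move=> cf.
have : compact ((fun z : R * R => f z.1 z.2) @` (`[0%R, 1%R] `*` `[0%R, 1%R])).
  by apply: continuous_compact => //; apply: compact_setX; exact: segment_compact.
move/compact_bounded => [M [Mr HM]].
exists (`|M| + 1); first by rewrite ltr_pwDr.
move=> a b ha hb. apply: (HM (`|M| + 1)); first by rewrite (le_lt_trans (ler_norm M)) // ltrDl.
by exists (a, b) => //; split; rewrite /= -?in_setE.
Qed.

Arguments L2 {f}.

Lemma sliceC (rho : R -> R -> R) x : in_class_C rho -> x \in `[0%R, 1%R] ->
  {within `[0%R, 1%R], continuous (rho x)}.
Proof.
case=> _ hc _ _ hx; apply/subspace_continuousP => y hy.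
apply/cvgrPdist_lt => e e0.
have Az : (`[0%R, 1%R] `*` `[0%R, 1%R]) (x, y) by split => //=; rewrite -in_setE.
have [d d0 Hd] := L1 hc _ Az _ e0.
rewrite /within /=; apply/nbhs_ballP; exists d => // w hw Aw.
apply: (Hd (x, w)) => /=.
- by split.
- by rewrite subrr normr0.
- by move: hw; rewrite /ball /= distrC.
Qed.

Lemma near_inv_lt (d : R) : 0 < d -> \forall n \near \oo, 0 < (n%:R : R) /\ (n%:R : R)^-1 < d.
Proof.
move=> d0; apply: filterS (nbhs_infty_gtr d^-1) => m hm.
have m0 : (0 : R) < m%:R by apply: lt_trans hm; rewrite invr_gt0.
by split => //; rewrite invf_plt ?posrE.
Qed.

Lemma riemann (rho : R -> R -> R) (u : nat -> R) (x t : R) : in_class_C rho ->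
  (forall n, u n \in `[0%R, 1%R]) -> u n @[n --> \oo] --> x -> x \in `[0%R, 1%R] ->
  (\sum_(k < n) (if k.+1%:R / n%:R <= t then rho (u n) (k.+1%:R / n%:R) else 0) * n%:R^-1)
     @[n --> \oo] --> cdf_Y rho x t.
Proof.
move=> hC hu cu hx.
have [hpos hcont _ _] := hC.
have [M M0 HM] := L2 hcont.
set D : set R := `[0%R, 1%R] `&` `]-oo, t].
have mD : measurable D by apply: measurableI; exact: measurable_itv.
have DI : D `<=` `[0%R, 1%R] by move=> y [].
pose F n k := if k.+1%:R / n%:R <= t then rho (u n) (k.+1%:R / n%:R) else 0.
pose h n y := \sum_(k < n) F n k * \1_(cell n k) y.
have k01 n (k : nat) : (k < n)%N -> (k.+1%:R / n%:R : R) \in `[0%R, 1%R].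
  move=> kn; rewrite in_itv /=; apply/andP; split; first by rewrite divr_ge0.
  have n0 : (0:R) < n%:R by rewrite ltr0n (leq_ltn_trans (leq0n _) kn).
  by rewrite ler_pdivrMr // mul1r ler_nat.
have intE n : (0 < n)%N -> (\int[@lebesgue_measure R]_(y in D) (h n y)%:E =
   (\sum_(k < n) F n k * n%:R^-1)%:E)%E.
  move=> n0; apply: integral_cells => // k.
    by rewrite /F; case: ifP => // _; apply/ltW/hpos => //; exact: k01.
  rewrite /F; case: ifP => [kt _|]; last by rewrite eqxx.
  move=> y; rewrite /cell /= in_itv /= => /andP[a b]; split.
    rewrite /= in_itv /=; apply/andP; split; last first.
      by apply: (le_trans b); have := k01 n k (ltn_ord k); rewrite in_itv => /andP[].
    by apply: ltW; apply: le_lt_trans a; rewrite divr_ge0 ?ler0n.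
  by rewrite /= in_itv /= (le_trans b kt).
have mf : measurable_fun D (EFin \o rho x).
  apply: (measurable_funS _ DI); first exact: measurable_itv.
  apply: (measurable_int (@lebesgue_measure R)).
  apply: continuous_compact_integrable; first exact: segment_compact.
  exact: sliceC.
have ig : (@lebesgue_measure R).-integrable D (cst M%:E).
  eapply integrableS; [ | | exact: DI | ].
  - exact: measurable_itv.
  - by apply: measurableI; exact: measurable_itv.
  apply: (@continuous_compact_integrable _ (cst M)); first exact: segment_compact.
  by apply: continuous_subspaceT; exact: cst_continuous.
have mf_ n : measurable_fun D (EFin \o h n).
  apply/measurable_EFinP; apply: measurable_sum => k.
  apply: measurable_funM; first exact: measurable_cst.
  by apply: measurable_indic; exact: measurable_itv.
have f_g : {ae @lebesgue_measure R, forall y n, D y -> (`|(EFin \o h n) y| <= cst M%:E y)%E}.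
  apply: aeW => y n Dy /=; rewrite lee_fin /h.
  have [->|[k [hk ->]]] := sum_cell n (F n) y; first by rewrite normr0 ltW.
  rewrite /F; case: ifP => _; last by rewrite normr0 ltW.
  by apply: HM; [exact: hu | exact: k01].
have f_f : {ae @lebesgue_measure R, forall y, D y ->
    (fun n => (EFin \o h n) y) @ \oo --> (EFin \o rho x) y}.
  exists ([set 0%R] `|` [set t]); split.
  - by apply: measurableU; exact: measurable_set1.
  - by apply: null_set_setU; try exact: measurable_set1; exact: lebesgue_measure_set1.
  move=> y; apply: contra_notP => Ny Dy.
  have [D1 D2] := Dy.
  move: D1 D2; rewrite /= !in_itv /= => /andP[y0 y1] yt.
  have y0' : 0 < y.
    rewrite lt_neqAle y0 andbT; apply/eqP => y0e; apply: Ny; by left.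
  have yt' : y < t.
    rewrite lt_neqAle yt andbT; apply/eqP => yte; apply: Ny; by right.
  apply/fine_cvgP; split; first exact: nearW.
  apply/cvgrPdist_lt => e e0.
  have Az : (`[0%R, 1%R] `*` `[0%R, 1%R]) (x, y).
    by split => /=; rewrite in_itv /= ?y0 ?y1 //; move: hx; rewrite in_itv.
  have [d d0 Hd] := L1 hcont _ Az _ e0.
  have hud := cu; move/cvgrPdist_lt : hud => /(_ d d0) hud.
  have ty0 : 0 < t - y by rewrite subr_gt0.
  near=> n.
  have [nR0 hd1] : 0 < (n%:R : R) /\ (n%:R : R)^-1 < d by near: n; exact: near_inv_lt.
  have [_ hd2] : 0 < (n%:R : R) /\ (n%:R : R)^-1 < t - y by near: n; exact: near_inv_lt.
  have hu1 : `|x - u n| < d by near: n.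
  have n0 : (0 < n)%N by rewrite -(ltr0n R).
  have [k hk] := exists_cell n y n0 y0'.
  have hk' := hk; move: hk'; rewrite /cell /= in_itv /= => /andP[a b].
  have e1 : (k.+1%:R / n%:R : R) = k%:R / n%:R + n%:R^-1 by rewrite -natr1 mulrDl mul1r.
  have kn : (k < n)%N.
    have : (k%:R : R) < n%:R.
      by move: a; rewrite ltr_pdivrMr // => a; apply: (lt_le_trans a); rewrite ler_piMl.
    by rewrite ltr_nat.
  have kt : (k.+1%:R / n%:R : R) <= t by rewrite e1; apply: ltW; lra.
  rewrite /= /h (sum_cell1 n (F n) y k kn hk) /F kt.
  apply: (Hd (u n, k.+1%:R / n%:R)) => /=.
  - by split; [exact: hu | exact: k01].
  - by rewrite distrC.
  - by rewrite ger0_norm ?subr_ge0 //; lra.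
have [intf _ Hc] := @dominated_convergence _ _ _ (@lebesgue_measure R) D mD
  (fun n => EFin \o h n) (EFin \o rho x) (cst M%:E) mf_ mf f_f ig f_g.
have fin : (\int[@lebesgue_measure R]_(y in D) (EFin \o rho x) y)%E \is a fin_num.
  by apply: (integrable_fin_num _ intf); apply: measurableI; exact: measurable_itv.
have -> : cdf_Y rho x t = fine (\int[@lebesgue_measure R]_(y in D) (EFin \o rho x) y) by [].
move: Hc; rewrite -(fineK fin) => /fine_cvgP [_ Hc'].
apply: cvg_trans Hc'; apply: near_eq_cvg; near=> n.
have n0 : (0 < n)%N by near: n; exists 1%N.
change (fine (\int[@lebesgue_measure R]_(y in D) (h n y)%:E)%E = \sum_(k < n) F n k / n%:R).
by rewrite intE.
Unshelve. all: end_near. Qed.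
End S.
Lemma bigmax_ge (R : realType) (I : finType) (A : pred I) (F : I -> R) j :
  j \in A -> F j <= \big[Num.max/0]_(i in A) F i.
Proof. by move=> Aj; rewrite (bigD1 j) //= le_max lexx. Qed.
Arguments bigmax_ge {R I A} F {j}.

Section Fin.
Variables (R : realType) (rho : R -> R -> R) (n l : nat)
  (P : {ffun {perm 'I_n} -> R}) (pn : {ffun 'I_l -> 'I_n}) (M : R).
Hypothesis n0 : (0 < n)%N.
Hypothesis pn_inj : injective pn.
Hypothesis hpos : forall x y, x \in `[0%R,1%R] -> y \in `[0%R,1%R] -> 0 < rho x y.
Hypothesis hM : forall a b, a \in `[0%R,1%R] -> b \in `[0%R,1%R] -> `|rho a b| <= M.

Let nR0 : (0:R) < n%:R. Proof. by rewrite ltr0n. Qed.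

Lemma ord01 (i : 'I_n) : (i.+1%:R / n%:R : R) \in `[0%R,1%R].
Proof.
rewrite in_itv /=; apply/andP; split; first by rewrite divr_ge0.
by rewrite ler_pdivrMr // mul1r ler_nat.
Qed.

Definition Pr (q : {ffun 'I_l -> 'I_n}) :=
  \prod_(a < l) rho ((pn a).+1%:R / n%:R) ((q a).+1%:R / n%:R).
Definition W q := Pr q * (n%:R^-1)^+l.

Lemma Pr_gt0 q : 0 < Pr q.
Proof. by apply: prodr_gt0 => a _; apply: hpos; exact: ord01. Qed.

Lemma Pr_le q : Pr q <= M ^+ l.
Proof.
have -> : M ^+ l = \prod_(a < l) M by rewrite prodr_const card_ord.
apply: ler_prod => a _; apply/andP; split; first by apply/ltW/hpos; exact: ord01.
apply: le_trans (ler_norm _) _; by apply: hM; exact: ord01.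
Qed.

Lemma W_ge0 q : 0 <= W q.
Proof. by rewrite mulr_ge0 ?exprn_ge0 ?invr_ge0 ?ler0n // ltW // Pr_gt0. Qed.

Definition delta := sup_deviation rho l P.

Lemma pn_in : pn \in Sinj n l.
Proof. by rewrite /Sinj inE; apply/injectiveP. Qed.

Lemma dev_le q : q \in Sinj n l -> deviation rho P pn q <= delta.
Proof.
move=> hq; rewrite /delta /sup_deviation.
apply: le_trans (bigmax_ge (fun p => \big[Num.max/0]_(q in Sinj n l) deviation rho P p q) pn_in).
exact: (bigmax_ge (fun q => deviation rho P pn q) hq).
Qed.

Lemma delta_ge0 : 0 <= delta.
Proof. exact: le_trans (normr_ge0 _) (dev_le pn pn_in). Qed.

Lemma diff_le q : q \in Sinj n l ->
  `|prob_map P pn q - W q| <= M ^+ l * delta * (n%:R^-1)^+l.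
Proof.
move=> hq; have hd := dev_le q hq; rewrite /deviation in hd.
have P0 := Pr_gt0 q.
have PrE : prob_map P pn q - W q =
    Pr q * (n%:R^-1)^+l * ((n%:R ^+ l * prob_map P pn q) / Pr q - 1).
  rewrite /W exprVn; have z0 : n%:R ^+ l != 0 :> R by rewrite expf_neq0 // gt_eqF.
  move: (n%:R ^+ l) z0 (Pr q) (prob_map P pn q) (gt_eqF P0) => z z0 x y x0.
  by field; rewrite x0 z0.
rewrite PrE normrM ger0_norm; last by rewrite mulr_ge0 ?exprn_ge0 ?invr_ge0 ?ler0n // ltW.
rewrite mulrAC; apply: ler_wpM2r; first by rewrite exprn_ge0 ?invr_ge0 ?ler0n.
by apply: ler_pM => //; [exact: ltW | exact: Pr_le].
Qed.

Lemma A_le : \sum_(q in Sinj n l) `|prob_map P pn q - W q| <= M ^+ l * delta.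
Proof.
apply: (@le_trans _ _ (\sum_(q in Sinj n l) M ^+ l * delta * (n%:R^-1)^+l)).
  by apply: ler_sum => q hq; exact: diff_le.
have M0 : 0 <= M.
  exact: le_trans (normr_ge0 _) (hM _ _ (ord01 (Ordinal n0)) (ord01 (Ordinal n0))).
have K0 : 0 <= M ^+ l * delta * (n%:R^-1)^+l.
  by rewrite !mulr_ge0 ?exprn_ge0 ?invr_ge0 ?ler0n ?delta_ge0.
rewrite sumr_const -[_ *+ #|_|]mulr_natr.
have hc : (#|Sinj n l| <= n ^ l)%N.
  by have := max_card (mem (Sinj n l)); rewrite card_ffun !card_ord.
apply: (@le_trans _ _ (M^+l * delta * (n%:R^-1) ^+ l * (n ^ l)%:R)).
  by apply: (ler_wpM2l K0); rewrite ler_nat.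
by rewrite natrX -mulrA -exprMn mulVf ?gt_eqF // expr1n mulr1.
Qed.

Lemma part (C : pred {ffun 'I_l -> 'I_n}) :
  \sum_(q in Sinj n l | C q) prob_map P pn q =
  \sum_(s : {perm 'I_n} | C [ffun a => s (pn a)]) P s.
Proof.
rewrite [RHS](partition_big (fun s : {perm 'I_n} => [ffun a => s (pn a)])
   (fun q => (q \in Sinj n l) && C q)) /=; last first.
  move=> s Cs; rewrite Cs andbT /Sinj inE; apply/injectiveP => a b.
  by rewrite !ffunE => /perm_inj; exact: pn_inj.
apply: eq_bigr => q /andP[_ Cq]; rewrite /prob_map; apply: eq_bigl => s.
rewrite andbC; case: eqP => [e|ne] /=.
  rewrite e Cq; apply/forallP => a; by rewrite -e ffunE.
apply/negbTE/forallP => h; apply: ne; apply/ffunP => a; rewrite ffunE; exact/eqP/h.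
Qed.

Lemma decomp (C : pred {ffun 'I_l -> 'I_n}) :
  `|\sum_(q in Sinj n l | C q) prob_map P pn q - \sum_q (if C q then W q else 0)| <=
   \sum_(q in Sinj n l) `|prob_map P pn q - W q| + \sum_(q in ~: Sinj n l) W q.
Proof.
rewrite [X in _ - X](bigID (fun q => q \in Sinj n l)) /=.
rewrite big_mkcondr opprD addrA -sumrB.
apply: le_trans (ler_normB _ _) _; apply: lerD.
  apply: le_trans (ler_norm_sum _ _ _) _; apply: ler_sum => q _.
  by case: (C q); rewrite ?subrr ?normr0.
apply: le_trans (ler_norm_sum _ _ _) _.
rewrite [X in _ <= X](eq_bigl (fun q => ~~ (q \in Sinj n l))); last by move=> q; rewrite !inE.
apply: ler_sum => q _; case: (C q); rewrite ?normr0 ?W_ge0 //.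
by rewrite ger0_norm ?W_ge0.
Qed.

Lemma B_le : \sum_(q in ~: Sinj n l) W q <=
  \sum_q W q - \sum_(q in Sinj n l) prob_map P pn q + \sum_(q in Sinj n l) `|prob_map P pn q - W q|.
Proof.
have e1 : \sum_q W q = \sum_(q in Sinj n l) W q + \sum_(q in ~: Sinj n l) W q.
  rewrite (bigID (fun q => q \in Sinj n l)) /=; congr (_ + _).
  by apply: eq_bigl => q; rewrite !inE.
have e2 : \sum_(q in Sinj n l) prob_map P pn q - \sum_(q in Sinj n l) W q <=
    \sum_(q in Sinj n l) `|prob_map P pn q - W q|.
  by rewrite -sumrB; apply: le_trans (ler_norm _) (ler_norm_sum _ _ _).
rewrite e1; lra.
Qed.
End Fin.
Definition Tn (R : realType) (rho : R -> R -> R) l (p : 'I_l -> nat) n (c : 'I_l -> R) : R :=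
  \prod_(a < l) \sum_(k < n)
     (if k.+1%:R / n%:R <= c a then rho ((p a)%:R / n%:R) (k.+1%:R / n%:R) else 0) * n%:R^-1.

Arguments Tn {R} rho {l} p n c.

Lemma prod_if (R : realType) l (b : 'I_l -> bool) (r : 'I_l -> R) (z : R) :
  \prod_(a < l) ((if b a then r a else 0) * z) =
  (if [forall a, b a] then \prod_(a < l) r a else 0) * z ^+ l.
Proof.
case: ifP => [/forallP hb|/negbT].
  rewrite big_split /= prodr_const card_ord; congr (_ * _); apply: eq_bigr => a _; by rewrite hb.
by rewrite negb_forall => /existsP [a ha]; rewrite mul0r (bigD1 a) //= (negbTE ha) !mul0r.
Qed.

Lemma Tn_sum (R : realType) rho l (p : 'I_l -> nat) n (pn : {ffun 'I_l -> 'I_n}) c :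
  (forall a, (pn a).+1 = p a) ->
  Tn rho p n c = \sum_(q : {ffun 'I_l -> 'I_n}) (if [forall a, (q a).+1%:R / n%:R <= c a] then W R rho n l pn q else 0).
Proof.
move=> hpn; rewrite /Tn bigA_distr_bigA /=; apply: eq_bigr => q _.
rewrite prod_if /W /Pr; case: ifP => _; last by rewrite mul0r.
by congr (_ * _); apply: eq_bigr => a _; rewrite hpn.
Qed.

Lemma key (R : realType) (rho : R -> R -> R) (M : R) l n (P : {ffun {perm 'I_n} -> R})
  (p : 'I_l -> nat) (t : 'rV[R]_l) : (0 < l)%N ->
  (forall x y, x \in `[0%R,1%R] -> y \in `[0%R,1%R] -> 0 < rho x y) ->
  (forall a b, a \in `[0%R,1%R] -> b \in `[0%R,1%R] -> `|rho a b| <= M) ->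
  is_perm_law P -> (forall a, (1 <= p a <= n)%N) -> injective p ->
  `|cdf_scaled_image P p t - Tn rho p n (fun a => t ord0 a)| <=
     2 * (M ^+ l * sup_deviation rho l P) + (Tn rho p n (fun _ => 2) - 1).
Proof.
move=> l0 hpos hM [_ hsum] hp pinj.
have n0 : (0 < n)%N by have /andP[h1 h2] := hp (Ordinal l0); exact: leq_trans h1 h2.
case: n P hp hsum n0 => // m P hp hsum _.
pose pn : {ffun 'I_l -> 'I_m.+1} := [ffun a => inord (p a).-1].
have hpn a : (pn a).+1 = p a.
  have /andP[h1 h2] := hp a.
  by rewrite ffunE inordK ?prednK // -ltnS prednK.
have pn_inj : injective pn.
  by move=> a b e; apply: pinj; rewrite -hpn -(hpn b) e.
have pa s a : perm_app s (p a) = (s (pn a)).+1.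
  rewrite /perm_app; case: insubP => [i _ hi|].
    by congr (_.+1); congr (s _); apply: val_inj; rewrite hi -(hpn a).
  have /andP[h1 h2] := hp a.
  by rewrite prednK // h2.
set Ct := fun q : {ffun 'I_l -> 'I_m.+1} => [forall a, (q a).+1%:R / m.+1%:R <= t ord0 a].
have eF : cdf_scaled_image P p t = \sum_(q in Sinj m.+1 l | Ct q) prob_map P pn q.
  etransitivity; last exact: (esym (part R m.+1 l P pn pn_inj Ct)).
  rewrite /cdf_scaled_image; apply: eq_bigl => s.
  rewrite /Ct /=; apply/forallP/forallP => h a; move: (h a); rewrite ?pa ?ffunE; exact: id.
have e1 : \sum_(q in Sinj m.+1 l) prob_map P pn q = 1.
  rewrite -hsum; etransitivity; last exact: (part R m.+1 l P pn pn_inj (fun _ => true)).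
  by apply: eq_bigl => q; rewrite andbT.
have e2 : Tn rho p m.+1 (fun _ => 2) = \sum_q W R rho m.+1 l pn q.
  rewrite (Tn_sum _ _ _ _ _ _ _ hpn); apply: eq_bigr => q _; rewrite ifT //.
  apply/forallP => a; apply: (@le_trans _ _ 1); last by rewrite ler1n.
  by rewrite ler_pdivrMr ?ltr0n // mul1r ler_nat.
have eT : Tn rho p m.+1 (fun a => t ord0 a) =
    \sum_q (if Ct q then W R rho m.+1 l pn q else 0).
  exact: (Tn_sum _ _ _ _ _ _ _ hpn).
have hA := A_le R rho m.+1 l P pn M (ltn0Sn m) pn_inj hpos hM.
have hD := decomp R rho m.+1 l P pn (ltn0Sn m) hpos Ct.
have hB := B_le R rho m.+1 l P pn.
rewrite /delta in hA.
rewrite eF eT e2.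
move: hA hD hB; rewrite e1.
set X1 := \sum_(q in Sinj m.+1 l) _.
set X2 := \sum_(q in ~: Sinj m.+1 l) _.
set X3 := \sum_q W R rho m.+1 l pn q.
set X4 := `|_|.
set X5 := M ^+ l * _.
lra.
Qed.
Lemma cvg_big_prod (R : realType) (I : Type) (s : seq I) (f : I -> nat -> R) (L : I -> R) :
  (forall i, f i n @[n --> \oo] --> L i) ->
  (\prod_(i <- s) f i n) @[n --> \oo] --> \prod_(i <- s) L i.
Proof.
move=> h; elim: s => [|i s IH].
  rewrite big_nil; under eq_fun do rewrite big_nil; exact: cvg_cst.
rewrite big_cons; under eq_fun do rewrite big_cons; exact: cvgM.
Qed.

Theorem corollary1p2 (R : realType) (l : nat) (rho : R -> R -> R)
  (P : forall n : nat, {ffun {perm 'I_n} -> R})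
  (p : nat -> 'I_l -> nat) (x : 'I_l -> R) :
  (0 < l)%N ->
  in_class_C rho ->
  (forall n, (1 <= n)%N -> is_perm_law (P n)) ->
  sup_deviation rho l (P n) @[n --> \oo] --> 0 ->
  (forall n, (l <= n)%N ->
     (forall a, (1 <= p n a <= n)%N) /\ injective (p n)) ->
  (forall a, x a \in `[0%R, 1%R]) ->
  (forall a, (p n a)%:R / n%:R @[n --> \oo] --> x a) ->
  cvg_in_distribution (fun n => cdf_scaled_image (P n) (p n)) (cdf_indep_Y rho x).
Proof.
move=> l0 hC hlaw hdev hp hx hpx t _.
have [hpos hcont hint _] := hC.
have [M M0 HM] := @L2 R rho hcont.
pose u (a : 'I_l) (n : nat) : R := if (l <= n)%N then (p n a)%:R / n%:R else x a.
have hu a n : u a n \in `[0%R, 1%R].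
  rewrite /u; case: ifP => [ln|_]; last exact: hx.
  have [hb _] := hp n ln; have /andP[h1 h2] := hb a.
  have n0 : (0:R) < n%:R by rewrite ltr0n (leq_trans h1 h2).
  rewrite in_itv /=; apply/andP; split; first by rewrite divr_ge0.
  by rewrite ler_pdivrMr // mul1r ler_nat.
have cu a : u a n @[n --> \oo] --> x a.
  apply: cvg_trans (hpx a); apply: near_eq_cvg; near=> n.
  have ln : (l <= n)%N by near: n; exists l.
  by rewrite /u ln.
pose Ts (c : 'I_l -> R) n := \prod_(a < l) \sum_(k < n)
  (if k.+1%:R / n%:R <= c a then rho (u a n) (k.+1%:R / n%:R) else 0) * n%:R^-1.
have cT c : Ts c n @[n --> \oo] --> \prod_(a < l) cdf_Y rho (x a) (c a).
  apply: cvg_big_prod => a.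
  exact: (@riemann R rho (u a) (x a) (c a) hC (hu a) (cu a) (hx a)).
have c2 a : cdf_Y rho (x a) 2 = 1.
  rewrite /cdf_Y (_ : (`[0%R,1%R] `&` `]-oo, 2%R] = `[0%R,1%R])%classic).
    by rewrite hint.
  apply: setIidl => y; rewrite /= !in_itv /= => /andP[_ y1].
  by apply: le_trans y1 _; rewrite ler1n.
have T2 : Ts (fun _ => 2) n @[n --> \oo] --> (1:R).
  by have := cT (fun _ => 2); rewrite big1.
rewrite /cdf_indep_Y.
have cTt := cT (fun a => t ord0 a).
apply/cvgrPdist_lt => e e0.
have e20 : 0 < e / 2 by rewrite divr_gt0.
move/cvgrPdist_lt: cTt => /(_ _ e20) hT.
have r0 : (fun n => 2 * (M ^+ l * sup_deviation rho l (P n)) + (Ts (fun _ => 2) n - 1))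
    @ \oo --> (0 : R).
  have -> : (0:R) = 2 * (M ^+ l * 0) + (1 - 1) by rewrite !mulr0 subrr addr0.
  apply: cvgD; last by apply: cvgB => //; exact: cvg_cst.
  apply: cvgM; first exact: cvg_cst.
  by apply: cvgM => //; exact: cvg_cst.
move/cvgrPdist_lt: r0 => /(_ _ e20) hr.
near=> n.
have ln : (l <= n)%N by near: n; exists l.
have n1 : (1 <= n)%N by exact: leq_trans l0 ln.
have [hb hinj] := hp n ln.
have hK := key R rho M l n (P n) (p n) t l0 hpos HM (hlaw n n1) hb hinj.
have eTs c : Ts c n = Tn rho (p n) n c.
  by apply: eq_bigr => a _; apply: eq_bigr => k _; rewrite /u ln.
have h1 : `|\prod_(a < l) cdf_Y rho (x a) (t ord0 a) - Ts (fun a => t ord0 a) n| < e / 2.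
  by near: n.
have h2 : `|0 - (2 * (M ^+ l * sup_deviation rho l (P n)) + (Ts (fun _ => 2) n - 1))| < e / 2.
  by near: n.
rewrite !eTs in h1 h2.
have h3 := ler_distD (Tn rho (p n) n (fun a => t ord0 a))
  (\prod_(a < l) cdf_Y rho (x a) (t ord0 a)) (cdf_scaled_image (P n) (p n) t).
rewrite (distrC (Tn _ _ _ _)) in h3.
move: h2; rewrite sub0r normrN => h2.
have h4 := ler_norm (2 * (M ^+ l * sup_deviation rho l (P n)) + (Tn rho (p n) n (fun=> 2) - 1)).
apply: le_lt_trans h3 _.
lra.
Unshelve. all: end_near. Qed.
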